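(* Let $\mathfrak{f}_r$ be the free $2$-step nilpotent Lie algebra of rank $r$, with center $\mathfrak{z}=\Lambda^2(V)$. (i) If $r\equiv0\pmod 4$, then every complex structure on $\mathfrak{f}_r$ is $2$-step. (ii) If $r\equiv3\pmod 4$, then every complex structure $J$ on $\mathfrak{f}_r$ is $3$-step, and moreover $\mathfrak{z}\cap J\mathfrak{z}$ has codimension $1$ in $\mathfrak{z}$.
   Context: For a real vector space $V$ of dimension $r$, the free $2$-step nilpotent Lie algebra of rank $r$ is $\mathfrak{f}_r=V\oplus\Lambda^2(V)$ with Lie bracket $[v,w]=v\wedge w$ for $v,w\in V$ and $\Lambda^2(V)$ central. A complex structure on a real Lie algebra $\mathfrak{g}$ is a linear map $J:\mathfrak{g}\to\mathfrak{g}$ with $J^2=-I$ and $N_J(x,y):=[x,y]+J([Jx,y]+[x,Jy])-[Jx,Jy]=0$ for all $x,y\in\mathfrak{g}$. Given such $J$, define inductively $\mathfrak{a}_0(J)=0$ and $\mathfrak{a}_\ell(J)=\{x\in\mathfrak{g}: [x,\mathfrak{g}]\subset\mathfrak{a}_{\ell-1}(J)\text{ and }[Jx,\mathfrak{g}]\subset\mathfrak{a}_{\ell-1}(J)\}$ for $\ell\ge1$. $J$ is called nilpotent if $\mathfrak{a}_t(J)=\mathfrak{g}$ for some positive integer $t$, and $t$-step if $t$ is the smallest such integer. *)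

(* Defs.v *)
From HB Require Import structures.
From mathcomp Require Import all_boot all_order all_algebra.
From mathcomp Require Import reals.
Set Implicit Arguments. Unset Strict Implicit. Unset Printing Implicit Defensive.
Import Order.TTheory GRing.Theory Num.Theory.
Local Open Scope ring_scope.

(* Index set of the standard basis e_i /\ e_j (i < j) of Lambda^2(V), V = R^r. *)
Definition pairs (r : nat) := {p : 'I_r * 'I_r | (p.1 < p.2)%N}.

Definition Lam2 (R : realType) (r : nat) := {ffun pairs r -> R^o}.

(* Underlying vector space of the free 2-step nilpotent Lie algebra f_r = V (+) Lambda^2 V *)
Definition fr (R : realType) (r : nat) := ('rV[R]_r * Lam2 R r)%type.

Definition wedge (R : realType) (r : nat) (v w : 'rV[R]_r) : Lam2 R r :=
  [ffun p : pairs r => v 0 (val p).1 * w 0 (val p).2 - v 0 (val p).2 * w 0 (val p).1].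

Definition fr_bracket (R : realType) (r : nat) (x y : fr R r) : fr R r :=
  (0, wedge x.1 y.1).

Definition complex_structure (R : realType) (r : nat) (J : fr R r -> fr R r) : Prop :=
  [/\ (forall (a : R) (x y : fr R r), J (a *: x + y) = a *: J x + J y),
      (forall x, J (J x) = - x) &
      (forall x y : fr R r,
         fr_bracket x y + J (fr_bracket (J x) y + fr_bracket x (J y))
           - fr_bracket (J x) (J y) = 0)].

Fixpoint asc (R : realType) (r : nat) (J : fr R r -> fr R r) (l : nat) : fr R r -> Prop :=
  match l with
  | 0 => fun x => x = 0
  | l'.+1 => fun x => forall y : fr R r,
                asc J l' (fr_bracket x y) /\ asc J l' (fr_bracket (J x) y)
  end.

Definition is_step (R : realType) (r : nat) (J : fr R r -> fr R r) (t : nat) : Prop :=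
  [/\ (0 < t)%N, (forall x, asc J t x) &
      (forall s, (0 < s)%N -> (forall x, asc J s x) -> (t <= s)%N)].

Definition fr_z (R : realType) (r : nat) : {vspace fr R r} :=
  lker (linfun (fun x : fr R r => x.1)).

Definition J_z (R : realType) (r : nat) (J : fr R r -> fr R r) : {vspace fr R r} :=
  (linfun J @: fr_z R r)%VS.

(* Main.v *)
Require Import Defs.
From HB Require Import structures.
From mathcomp Require Import all_boot all_order all_algebra.
From mathcomp Require Import reals.
From mathcomp Require Import ring lra zify.
From Stdlib Require Classical.
Set Implicit Arguments. Unset Strict Implicit. Unset Printing Implicit Defensive.
Import Order.TTheory GRing.Theory Num.Theory.
Local Open Scope ring_scope.

Lemma det1D (R : comRingType) n (u : 'cV[R]_n) (v : 'rV_n) :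
  \det (1%:M + u *m v) = 1 + (v *m u) 0 0.
Proof.
have E1 : block_mx (1%:M : 'M[R]_n) u (-v) (1%:M : 'M_1)
   = block_mx 1%:M 0 (-v) 1%:M *m block_mx 1%:M u 0 (1%:M + v *m u).
  rewrite mulmx_block !mulmx1 !mul1mx !mulmx0 !mul0mx !addr0 ?add0r.
  by rewrite mulNmx addrCA addNr addr0.
have E2 : block_mx (1%:M : 'M[R]_n) u (-v) (1%:M : 'M_1)
   = block_mx (1%:M + u *m v) u 0 1%:M *m block_mx 1%:M 0 (-v) 1%:M.
  rewrite mulmx_block !mulmx1 !mul1mx ?mulmx0 ?mul0mx ?addr0 ?add0r.
  by rewrite mulmxN addrK.
move: (congr1 determinant E2); rewrite E1 !det_mulmx !det_ublock !det_lblock !det_scalar !expr1n !mul1r !mulr1 => <-.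
by rewrite det_mx11 !mxE.
Qed.

Lemma det_sign (R : realType) n (M : 'M[R]_n) (p : 'cV_n) (w : 'rV_n) (k : R) :
  M *m M = - 1%:M + k *: (p *m w) -> 0 <= (-1) ^+ n * (1 - k * (w *m p) 0 0).
Proof.
move=> HM.
have : \det (M *m M) = (-1) ^+ n * (1 - k * (w *m p) 0 0).
  rewrite HM.
  have -> : - 1%:M + k *: (p *m w) = (-1) *: (1%:M + (- k *: p) *m w).
    by rewrite scaleN1r opprD scaleNr mulNmx opprK scalemxAl.
  rewrite detZ det1D -scalemxAr mxE mulNr.
  by [].
move=> <-; rewrite det_mulmx; by rewrite -expr2 sqr_ge0.
Qed.


Lemma wedge_par (R : realType) r (v w : 'rV[R]_r) k :
  w 0 k != 0 -> wedge v w = 0 -> v = (v 0 k / w 0 k) *: w.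
Proof.
move=> Hk Hw; apply/rowP => i; rewrite mxE.
case: (ltngtP i k) => h.
- have := congr1 (fun f : Lam2 R r => f (exist (fun p : 'I_r * 'I_r => (p.1 < p.2)%N) (i, k) h)) Hw.
  rewrite !ffunE /= => /eqP; rewrite subr_eq0 => /eqP E.
  apply: (mulIf Hk); rewrite E; field; exact: Hk.
- have := congr1 (fun f : Lam2 R r => f (exist (fun p : 'I_r * 'I_r => (p.1 < p.2)%N) (k, i) h)) Hw.
  rewrite !ffunE /= => /eqP; rewrite subr_eq0 => /eqP E.
  apply: (mulIf Hk); rewrite -E; field; exact: Hk.
- have -> : i = k by apply: val_inj.
  by rewrite mulfVK.
Qed.


Lemma lin1E (R : realType) m n (f : 'rV[R]_m -> 'rV[R]_n) :
  (forall a u v, f (a *: u + v) = a *: f u + f v) -> forall u, u *m lin1_mx f = f u.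
Proof.
move=> Hf u.
pose fL : {linear 'rV[R]_m -> 'rV[R]_n} := HB.pack f (GRing.isLinear.Build _ _ _ _ f Hf).
exact: (mul_rV_lin1 fL).
Qed.

Lemma mx11_mul (R : realType) n (s : 'M[R]_1) (w : 'rV[R]_n) : s *m w = s 0 0 *: w.
Proof. by apply/rowP=> j; rewrite !mxE big_ord1. Qed.

Lemma mx_rowsE (R : realType) n (M N : 'M[R]_n) :
  (forall u : 'rV_n, u *m M = u *m N) -> M = N.
Proof. by move=> H; apply/row_matrixP=> i; rewrite !rowE H. Qed.

Lemma wedge_all0 (R : realType) r (b : 'rV[R]_r) : (1 < r)%N ->
  (forall e, wedge b e = 0) -> b = 0.
Proof.
move=> Hr H; apply/rowP => i; rewrite mxE.
have h0 : (0 < r)%N by lia.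
have [j Hj] : exists j : 'I_r, j != i.
  case: (i =P Ordinal h0) => [->|hi]; first by exists (Ordinal Hr); apply/eqP => -[].
  by exists (Ordinal h0); apply/eqP => E; apply: hi.
move/ffunP: (H (delta_mx 0 j)) => Hb.
case: (ltngtP i j) => h.
- move: (Hb (exist (fun p : 'I_r * 'I_r => (p.1 < p.2)%N) (i, j) h)).
  by rewrite !ffunE /= !mxE !eqxx /= eq_sym (negbTE Hj) mulr1 mulr0 subr0.
- move: (Hb (exist (fun p : 'I_r * 'I_r => (p.1 < p.2)%N) (j, i) h)).
  rewrite !ffunE /= !mxE !eqxx /= eq_sym (negbTE Hj) mulr1 mulr0 sub0r.
  by move/eqP; rewrite oppr_eq0 => /eqP.
- by move/eqP: Hj; case; apply: val_inj.
Qed.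

Lemma lam2_decomp (R : realType) r (a : Lam2 R r) :
  a = \sum_(p : pairs r) a p *: wedge (delta_mx 0 (val p).1) (delta_mx 0 (val p).2).
Proof.
apply/ffunP => q; rewrite sum_ffunE (bigD1 q) //= big1 ?addr0.
  rewrite !ffunE !mxE !eqxx /=.
  have : (val q).2 != (val q).1 by case: q => [[i j]] /= h; rewrite neq_ltn h orbT.
  move/negbTE => ->; rewrite mul0r subr0 mulr1; exact: (esym (mulr1 (a q))).
move=> p hp; rewrite !ffunE !mxE /=.
have H1 : ~~ (((sval q).1 == (sval p).1) && ((sval q).2 == (sval p).2)).
  apply: contra hp => /andP [/eqP e1 /eqP e2].
  case: q p e1 e2 => [[i j] hq] [[i' j'] hp'] /= e1 e2.
  by apply/eqP; apply: val_inj => /=; rewrite e1 e2.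
have H2 : ~~ (((sval q).2 == (sval p).1) && ((sval q).1 == (sval p).2)).
  apply/negP => /andP [/eqP e1 /eqP e2].
  case: q p hp e1 e2 {H1} => [[i j] hq] [[i' j'] hp] /= _ e1 e2.
  by move: hq hp; rewrite e1 e2 => h1 h2; have := ltn_trans h1 h2; rewrite ltnn.
have -> : (((sval q).1 == (sval p).1)%:R * ((sval q).2 == (sval p).2)%:R -
   ((sval q).2 == (sval p).1)%:R * ((sval q).1 == (sval p).2)%:R : R) = 0.
  by move: H1 H2; do 4 case: eqP => //= _; rewrite ?mulr0 ?mul0r ?subrr.
exact: (mulr0 (a p)).
Qed.

Section Main.
Variables (R : realType) (r : nat) (J : fr R r -> fr R r).
Hypothesis HJ : complex_structure J.

Lemma Jlin a (x y : fr R r) : J (a *: x + y) = a *: J x + J y.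
Proof. by case: HJ. Qed.
Lemma Jsq x : J (J x) = - x.
Proof. by case: HJ. Qed.
Lemma Jnij (x y : fr R r) : fr_bracket x y + J (fr_bracket (J x) y + fr_bracket x (J y))
           - fr_bracket (J x) (J y) = 0.
Proof. by case: HJ. Qed.

Definition Jl : {linear fr R r -> fr R r} :=
  HB.pack J (GRing.isLinear.Build _ _ _ _ J Jlin).

Lemma J0 : J 0 = 0. Proof. exact: (linear0 Jl). Qed.
Lemma JD x y : J (x + y) = J x + J y. Proof. exact: (linearD Jl). Qed.
Lemma JZ a x : J (a *: x) = a *: J x. Proof. exact: (linearZZ Jl). Qed.

Lemma pairE (v w : 'rV[R]_r) (a b : Lam2 R r) : (v, a) + (w, b) = (v + w, a + b) :> fr R r.
Proof. by []. Qed.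
Lemma pairZ (c : R) (v : 'rV[R]_r) (a : Lam2 R r) : c *: ((v, a) : fr R r) = (c *: v, c *: a).
Proof. by []. Qed.

Definition Am (v : 'rV[R]_r) := (J (v, 0)).1.
Definition Bm (a : Lam2 R r) := (J (0, a)).1.
Definition Cm (v : 'rV[R]_r) := (J (v, 0)).2.
Definition Dm (a : Lam2 R r) := (J (0, a)).2.

Lemma Jvd v a : J (v, a) = (Am v + Bm a, Cm v + Dm a).
Proof.
have -> : (v, a) = (v, 0) + (0, a) :> fr R r by rewrite pairE addr0 add0r.
by rewrite JD.
Qed.

Lemma AmL a u v : Am (a *: u + v) = a *: Am u + Am v.
Proof.
rewrite /Am.
have -> : (a *: u + v, 0) = a *: (u, 0) + (v, 0) :> fr R r by rewrite pairZ pairE scaler0 ?addr0 ?add0r.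
by rewrite JD JZ.
Qed.
Lemma CmL a u v : Cm (a *: u + v) = a *: Cm u + Cm v.
Proof.
rewrite /Cm.
have -> : (a *: u + v, 0) = a *: (u, 0) + (v, 0) :> fr R r by rewrite pairZ pairE scaler0 ?addr0 ?add0r.
by rewrite JD JZ.
Qed.
Lemma BmL c u v : Bm (c *: u + v) = c *: Bm u + Bm v.
Proof.
rewrite /Bm.
have -> : (0, c *: u + v) = c *: (0, u) + (0, v) :> fr R r by rewrite pairZ pairE scaler0 ?addr0 ?add0r.
by rewrite JD JZ.
Qed.
Lemma DmL c u v : Dm (c *: u + v) = c *: Dm u + Dm v.
Proof.
rewrite /Dm.
have -> : (0, c *: u + v) = c *: (0, u) + (0, v) :> fr R r by rewrite pairZ pairE scaler0 ?addr0 ?add0r.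
by rewrite JD JZ.
Qed.

Definition AmLin : {linear 'rV[R]_r -> 'rV[R]_r} := HB.pack Am (GRing.isLinear.Build _ _ _ _ Am AmL).
Definition BmLin : {linear Lam2 R r -> 'rV[R]_r} := HB.pack Bm (GRing.isLinear.Build _ _ _ _ Bm BmL).
Definition CmLin : {linear 'rV[R]_r -> Lam2 R r} := HB.pack Cm (GRing.isLinear.Build _ _ _ _ Cm CmL).
Definition DmLin : {linear Lam2 R r -> Lam2 R r} := HB.pack Dm (GRing.isLinear.Build _ _ _ _ Dm DmL).

Lemma Am0 : Am 0 = 0. Proof. exact: (linear0 AmLin). Qed.
Lemma Bm0 : Bm 0 = 0. Proof. exact: (linear0 BmLin). Qed.
Lemma Cm0 : Cm 0 = 0. Proof. exact: (linear0 CmLin). Qed.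
Lemma Dm0 : Dm 0 = 0. Proof. exact: (linear0 DmLin). Qed.

Lemma sqV v : Am (Am v) + Bm (Cm v) = - v /\ Cm (Am v) + Dm (Cm v) = 0.
Proof.
have := Jsq (v, 0); rewrite Jvd Bm0 Dm0 !addr0 Jvd => -[-> ->].
by rewrite oppr0.
Qed.
Lemma sqZ a : Am (Bm a) + Bm (Dm a) = 0 /\ Cm (Bm a) + Dm (Dm a) = - a.
Proof.
have := Jsq (0, a); rewrite Jvd Am0 Cm0 !add0r Jvd => -[-> ->].
by rewrite oppr0.
Qed.

Lemma pairN (v : 'rV[R]_r) (a : Lam2 R r) : - ((v, a) : fr R r) = (- v, - a).
Proof. by []. Qed.

Lemma wedge0l (w : 'rV[R]_r) : wedge 0 w = 0.
Proof. by apply/ffunP=> p; rewrite !ffunE !mxE !mul0r subrr. Qed.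
Lemma wedge0r (w : 'rV[R]_r) : wedge w 0 = 0.
Proof. by apply/ffunP=> p; rewrite !ffunE !mxE !mulr0 subrr. Qed.

Lemma nijV (x y : fr R r) : Bm (wedge (J x).1 y.1 + wedge x.1 (J y).1) = 0.
Proof.
move: (Jnij x y) => /(congr1 fst); rewrite /fr_bracket /= pairE add0r oppr0 addr0 add0r.
by [].
Qed.
Lemma nijZ (x y : fr R r) :
  wedge x.1 y.1 + Dm (wedge (J x).1 y.1 + wedge x.1 (J y).1) - wedge (J x).1 (J y).1 = 0.
Proof.
move: (Jnij x y) => /(congr1 snd); rewrite /fr_bracket /= pairE add0r.
by [].
Qed.

Lemma F1 a b : wedge (Bm a) (Bm b) = 0.
Proof.
have := nijZ (0, a) (0, b); rewrite !Jvd /= ?Am0 ?Cm0 ?add0r !wedge0l !wedge0r ?addr0 ?Dm0.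
by rewrite addr0 add0r => /eqP; rewrite oppr_eq0 => /eqP.
Qed.

Lemma F2 d (v : 'rV[R]_r) : Bm (wedge (Bm d) v) = 0.
Proof.
by have := nijV (0, d) (v, 0); rewrite !Jvd /= Am0 add0r wedge0l addr0.
Qed.

Lemma AmZ c u : Am (c *: u) = c *: Am u. Proof. exact: (linearZZ AmLin). Qed.
Lemma BmZ c u : Bm (c *: u) = c *: Bm u. Proof. exact: (linearZZ BmLin). Qed.
Lemma CmZ c u : Cm (c *: u) = c *: Cm u. Proof. exact: (linearZZ CmLin). Qed.
Lemma DmZ c u : Dm (c *: u) = c *: Dm u. Proof. exact: (linearZZ DmLin). Qed.
Lemma AmD u v : Am (u + v) = Am u + Am v. Proof. exact: (linearD AmLin). Qed.
Lemma BmD u v : Bm (u + v) = Bm u + Bm v. Proof. exact: (linearD BmLin). Qed.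
Lemma CmD u v : Cm (u + v) = Cm u + Cm v. Proof. exact: (linearD CmLin). Qed.
Lemma DmD u v : Dm (u + v) = Dm u + Dm v. Proof. exact: (linearD DmLin). Qed.
Lemma AmN u : Am (- u) = - Am u. Proof. exact: (linearN AmLin). Qed.
Lemma BmN u : Bm (- u) = - Bm u. Proof. exact: (linearN BmLin). Qed.
Lemma CmN u : Cm (- u) = - Cm u. Proof. exact: (linearN CmLin). Qed.
Lemma DmN u : Dm (- u) = - Dm u. Proof. exact: (linearN DmLin). Qed.

Lemma B0_even : (forall a, Bm a = 0) -> ~~ odd r.
Proof.
move=> HB.
pose M := lin1_mx Am.
have HM : M *m M = - 1%:M + 0 *: ((0 : 'cV[R]_r) *m (0 : 'rV[R]_r)).
  apply: mx_rowsE => u.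
  rewrite mulmxA !(lin1E AmL) scale0r addr0 mulmxN mulmx1.
  by have [E _] := sqV u; rewrite HB addr0 in E.
have := det_sign HM; rewrite mul0r subr0 mulr1 -signr_odd.
case: (odd r) => //; rewrite expr1; lra.
Qed.

Lemma Bnz_odd a0 : Bm a0 != 0 -> odd r.
Proof.
move=> Hw.
have [k Hk] : exists k, Bm a0 0 k != 0.
  case: (pickP (fun k => Bm a0 0 k != 0)) => [k Hk|H]; first by exists k.
  exfalso; move/eqP: Hw; apply; apply/rowP => k.
  by have := H k; rewrite mxE => /negbFE /eqP.
pose phi a := Bm a 0 k / Bm a0 0 k.
have HB a : Bm a = phi a *: Bm a0 := wedge_par Hk (F1 a a0).
pose lam := - phi (Dm a0).
have HBD a : Bm (Dm a) = - lam *: Bm a.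
  have [E _] := sqZ a.
  have E' : Bm (Dm a) = - Am (Bm a) by apply/eqP; rewrite -addr_eq0 addrC E.
  have [E0 _] := sqZ a0.
  have E0' : Am (Bm a0) = - Bm (Dm a0) by apply/eqP; rewrite -addr_eq0 E0.
  rewrite E' (HB a) AmZ E0' (HB (Dm a0)) /lam.
  by apply/rowP=> j; rewrite !mxE; ring.
have HAB y : Am (Bm y) = lam *: Bm y.
  have [E _] := sqZ y.
  have E' : Am (Bm y) = - Bm (Dm y) by apply/eqP; rewrite -addr_eq0 E.
  by rewrite E' HBD scaleNr opprK.
have HBCB a : Bm (Cm (Bm a)) = -(1 + lam ^+ 2) *: Bm a.
  have [_ E] := sqZ a.
  have E' : Cm (Bm a) = - a - Dm (Dm a) by rewrite -E addrK.
  rewrite E' BmD BmN BmN !HBD.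
  by apply/rowP=> j; rewrite !mxE; ring.
have HBCA v : Bm (Cm (Am v)) = lam *: Bm (Cm v).
  have [_ E] := sqV v.
  have E' : Cm (Am v) = - Dm (Cm v) by apply/eqP; rewrite -addr_eq0 E.
  by rewrite E' BmN HBD scaleNr opprK.
have HAA v : Am (Am v) = - v - Bm (Cm v).
  by have [E _] := sqV v; rewrite -E addrK.
have [c Hc] : exists c : R, 1 + (-1 + 2 * c * lam - c ^+ 2 * (1 + lam ^+ 2)) * (1 + lam ^+ 2) < 0.
  case: (lerP lam 0) => h; [exists 1 | exists (-1)]; nra.
pose kk := -1 + 2 * c * lam - c ^+ 2 * (1 + lam ^+ 2).
pose P v := Bm (Cm v).
pose X v := Am v + c *: P v.
have PL : forall a u v, P (a *: u + v) = a *: P u + P v.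
  by move=> a u v; rewrite /P CmL BmL.
have XL : forall a u v, X (a *: u + v) = a *: X u + X v.
  move=> a u v; rewrite /X PL AmL.
  by apply/rowP=> j; rewrite !mxE; ring.
have XX v : X (X v) = - v + kk *: P v.
  rewrite /X /P AmD AmZ CmD CmZ BmD BmZ HAB HBCA HBCB HAA /kk.
  by apply/rowP=> j; rewrite !mxE; ring.
pose M := lin1_mx X.
pose pc := \col_i ((P (delta_mx 0 i)) 0 k / Bm a0 0 k).
have HQ : lin1_mx P = pc *m Bm a0.
  apply/matrixP => i j; rewrite !mxE big_ord1 !mxE.
  by rewrite {1}/P (HB (Cm _)) mxE.
have HMM : M *m M = - 1%:M + kk *: (pc *m Bm a0).
  apply: mx_rowsE => u.
  rewrite mulmxA (lin1E XL) (lin1E XL) XX -HQ mulmxDr mulmxN mulmx1 -scalemxAr.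
  by rewrite (lin1E PL).
have Hs : (Bm a0 *m pc) 0 0 = -(1 + lam ^+ 2).
  have := lin1E PL (Bm a0); rewrite HQ mulmxA mx11_mul /P HBCB => /eqP.
  by rewrite -subr_eq0 -scalerBl scaler_eq0 (negbTE Hw) orbF subr_eq0 => /eqP.
have := det_sign HMM; rewrite Hs -signr_odd.
case: (odd r) => //; rewrite expr0 mul1r.
move: Hc; rewrite /kk; nra.
Qed.

Lemma rank1 a0 : Bm a0 != 0 -> forall a, exists t : R, Bm a = t *: Bm a0.
Proof.
move=> Hw a.
have [k Hk] : exists k, Bm a0 0 k != 0.
  case: (pickP (fun k => Bm a0 0 k != 0)) => [k Hk|H]; first by exists k.
  exfalso; move/eqP: Hw; apply; apply/rowP => k.
  by have := H k; rewrite mxE => /negbFE /eqP.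
by eexists; exact: (wedge_par Hk (F1 a a0)).
Qed.

Lemma asc1_z d : Bm d = 0 -> asc J 1 (0, d).
Proof.
move=> Hd y /=; rewrite /fr_bracket /= wedge0l; split => //.
by rewrite -/(Bm d) Hd wedge0l.
Qed.

Lemma asc2_z d : asc J 2 (0, d).
Proof.
move=> y; split; rewrite /fr_bracket /=; apply: asc1_z.
  by rewrite wedge0l Bm0.
exact: F2.
Qed.

Lemma not_abelian : (1 < r)%N -> ~ (forall x, asc J 1 x).
Proof.
move=> Hr H.
have h0 : (0 < r)%N by lia.
pose i0 := Ordinal h0; pose i1 := Ordinal Hr.
have [E _] := H (delta_mx 0 i0, 0) (delta_mx 0 i1, 0).
move: E; rewrite /fr_bracket /= => -[] /ffunP /(_ (exist (fun p : 'I_r * 'I_r => (p.1 < p.2)%N) (i0, i1) isT)).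
by rewrite !ffunE /= !mxE /= mulr1n mulr0n mul0r subr0 mulr1 => /eqP; rewrite oner_eq0.
Qed.

Lemma Bm_all0 : (forall u v, Bm (wedge u v) = 0) -> forall a, Bm a = 0.
Proof.
move=> H a.
have BS (F : pairs r -> Lam2 R r) : Bm (\sum_(p : pairs r) F p) = \sum_(p : pairs r) Bm (F p).
  exact: (linear_sum BmLin).
rewrite (lam2_decomp a) BS big1 // => p _.
by rewrite /= BmZ H scaler0.
Qed.

Lemma JN x : J (- x) = - J x. Proof. exact: (linearN Jl). Qed.

Lemma dim_part a0 : Bm a0 != 0 -> (\dim (fr_z R r :&: J_z J) + 1 = \dim (fr_z R r))%N.
Proof.
move=> Hw.
pose g (x : fr R r) := (J x).1.
have gL : forall c x y, g (c *: x + y) = c *: g x + g y by move=> c x y; rewrite /g Jlin.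
pose gl : {linear fr R r -> 'rV[R]_r} := HB.pack g (GRing.isLinear.Build _ _ _ _ g gL).
pose fstl : {linear fr R r -> 'rV[R]_r} :=
  HB.pack (fun x : fr R r => x.1) (GRing.isLinear.Build _ _ _ _ (fun x : fr R r => x.1) (fun c x y => erefl)).
have memz x : (x \in fr_z R r) = (x.1 == 0).
  by rewrite /fr_z memv_ker (lfunE fstl).
have HJz : J_z J = lker (linfun gl).
  apply/vspaceP => x; rewrite memv_ker (lfunE gl) /=.
  apply/memv_imgP/eqP => [[u Hu ->]|Hx].
    rewrite (lfunE Jl) /g Jsq.
    by case: u Hu => u1 u2; rewrite memz /= => /eqP ->; rewrite oppr0.
  exists (- J x); first by rewrite memz /= -/(g x) Hx oppr0.
  by rewrite (lfunE Jl) /= JN Jsq opprK.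
have Himg : (linfun gl @: fr_z R r)%VS = <[Bm a0]>%VS.
  apply/vspaceP => x; apply/memv_imgP/vlineP => [[u Hu ->]|[t ->]].
    rewrite (lfunE gl) /= /g.
    case: u Hu => u1 u2; rewrite memz /= => /eqP ->.
    exact: (rank1 Hw u2).
  exists (0, t *: a0); first by rewrite memz.
  by rewrite (lfunE gl) /= /g -/(Bm _) BmZ.
by rewrite HJz -(limg_ker_dim (linfun gl) (fr_z R r)) Himg dim_vline Hw.
Qed.

End Main.

Theorem mainTheorem9 (R : realType) (r : nat) :
  ((0 < r)%N -> (r %% 4 = 0)%N ->
     forall J : fr R r -> fr R r, complex_structure J -> is_step J 2)
  /\
  ((r %% 4 = 3)%N ->
     forall J : fr R r -> fr R r, complex_structure J ->
       is_step J 3 /\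
       (\dim (fr_z R r :&: J_z J) + 1 = \dim (fr_z R r))%N).
Proof.
split.
- move=> r0 r4 J HJ.
  have Hev : ~~ odd r by rewrite (divn_eq r 4) r4 addn0 oddM andbF.
  have HB : forall a, Bm J a = 0.
    move=> a; apply/eqP; apply: contraNT Hev => Ha; exact: (Bnz_odd HJ Ha).
  split => //.
    move=> x y; split; exact: (asc1_z (HB _)).
  move=> [|[|s]] // _ H; exfalso; apply: (not_abelian _ H); lia.
- move=> r3 J HJ.
  have Hodd : odd r by rewrite (divn_eq r 4) r3 oddD oddM andbF.
  have [a0 Ha0] : exists a0, Bm J a0 != 0.
    apply: Stdlib.Logic.Classical_Pred_Type.not_all_not_ex => H.
    have : ~~ odd r by apply: (B0_even HJ) => a; apply/eqP; apply/negPn/negP; exact: H.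
    by rewrite Hodd.
  split; last exact: (dim_part HJ Ha0).
  split => //.
    move=> x y; split; rewrite /fr_bracket; exact: (asc2_z HJ _).
  move=> [|[|[|s]]] // _ H; exfalso.
    apply: (not_abelian _ H); lia.
  move/negP: Ha0; apply; apply/eqP.
  apply: (Bm_all0 HJ) => u v.
  apply: wedge_all0; first lia.
  move=> e.
  have [E _] := H (u, 0) (v, 0).
  have [_ E2] := E (e, 0).
  by move: E2; rewrite /fr_bracket /= => -[].
Qed.
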